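(* For every tournament $T$ on $N$ nodes and every positive integer $k \le N$, the auxiliary bipartite digraph $G(T)$ contains no directed cycle of length $2$ (digon) and no directed cycle of length $4$.
   Context: Let $T=(V,E)$ be a tournament on $N$ nodes and let $k \le N$ be a positive integer. The auxiliary bipartite digraph $G(T)$ has vertex set $R \cup C$, where $R$ contains one vertex for each node of $T$ and $C$ contains one vertex for each $k$-element subset of $V$. Its arcs are: for each $X = \{v_1,\dots,v_k\} \in C$, the arcs $(v_i, X)$ for $1 \le i \le k$; and for each $u \in R$ and $X \in C$, the arc $(X, u)$ if and only if $(u, v_i) \in E$ for all $v_i \in X$. *)

(* Defs.v *)
From mathcomp Require Import all_boot.
Set Implicit Arguments. Unset Strict Implicit. Unset Printing Implicit Defensive.

Definition tournament (V : finType) (E : rel V) : Prop :=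
  (forall u, ~~ E u u) /\
  (forall u v, u != v -> (E u v && ~~ E v u) || (E v u && ~~ E u v)).

Definition ksubset (V : finType) (k : nat) := {X : {set V} | #|X| == k}.

(* Vertex set R \cup C of G(T): inl v is the vertex of R for node v,
   inr X is the vertex of C for the k-subset X. *)
Definition auxV (V : finType) (k : nat) := (V + ksubset V k)%type.

Definition aux_arc (V : finType) (E : rel V) (k : nat) (a b : auxV V k) : bool :=
  match a, b with
  | inl v, inr X => v \in val X
  | inr X, inl u => [forall v in val X, E u v]
  | _, _ => false
  end.

Definition has_digon (W : finType) (arc : W -> W -> bool) : Prop :=
  exists a b : W, [/\ a != b, arc a b & arc b a].

Definition has_4cycle (W : finType) (arc : W -> W -> bool) : Prop :=
  exists a b c d : W,
    uniq [:: a; b; c; d] /\ [&& arc a b, arc b c, arc c d & arc d a].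

(* Main.v *)
Require Import Defs.
From mathcomp Require Import all_boot.

Lemma tour_asym (V : finType) (E : rel V) : tournament E ->
  forall u v, E u v -> E v u -> False.
Proof.
move=> [irr tot] u v huv hvu.
case: (eqVneq u v) => [eq|ne].
  by subst v; move: (irr u); rewrite huv.
by move: (tot u v ne); rewrite huv hvu.
Qed.

Theorem lemma2 (N : nat) (V : finType) (E : rel V) (k : nat) :
  #|V| = N -> tournament E -> 0 < k -> k <= N ->
  ~ has_digon (@aux_arc V E k) /\ ~ has_4cycle (@aux_arc V E k).
Proof.
move=> _ hT _ _; have A := @tour_asym V E hT; split.
  move=> [[v|X] [[u|Y] [_ h1 h2]]] //=; rewrite /= in h1 h2.
  - move/forallP: h2 => /(_ v); rewrite h1 /= => h.
    by move: (hT.1 v); rewrite h.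
  - move/forallP: h1 => /(_ u); rewrite h2 /= => h.
    by move: (hT.1 u); rewrite h.
move=> [[v|X] [[u|Y] [[w|Z] [[x|W] [_ /and4P [h1 h2 h3 h4]]]]]] //=;
  rewrite /= in h1 h2 h3 h4.
- move/forallP: h2 => /(_ v); rewrite h1 /= => e1.
  move/forallP: h4 => /(_ w); rewrite h3 /= => e2.
  exact: A e1 e2.
- move/forallP: h1 => /(_ x); rewrite h4 /= => e1.
  move/forallP: h3 => /(_ u); rewrite h2 /= => e2.
  exact: A e1 e2.
Qed.
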